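(* $H$ is continuous on $\Gamma$.
   Context: Let $G=(\mathbb{V},E)$ be a finite graph with adjacency $\sim$. Let $a_{ij}=a_{ji}\ge0$ ($>0$ only if $i\sim j$) and $p_{ij}=p_{ji}\in[0,1]$ ($=0$ if $i\not\sim j$), with some $a_{ij}p_{ij}>0$. Fix $h_1\in(0,1]$; $\Delta$ is the set of arrays $x=(x_{ij})$ with $x_{ij}=x_{ji}\ge0$, $x_{ij}=0$ if $i\not\sim j$, $\sum_{i,j}x_{ij}=1$, $\sum_{(i,j):a_{ij}p_{ij}>0}x_{ij}\ge h_1$; $x_i=\sum_jx_{ij}$. $H(x)=\sum_{(i,j):x_{ij}>0}a_{ij}p_{ij}x_{ij}^2/(x_ix_j)$; $F(x)_{ij}=x_{ij}\big(a_{ij}p_{ij}\frac{x_{ij}}{x_ix_j}-H(x)\big)$, with $F_{ij}=0$ if $x_{ij}=0$ and $a_{ij}p_{ij}x_{ij}/(x_ix_j):=0$ if $a_{ij}p_{ij}=0$. $\Gamma=\{x\in\Delta:F(x)=0\}$, with the topology induced from $\mathbb{R}^{\mathbb{V}\times\mathbb{V}}$. *)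

(* Defs.v *)
From mathcomp Require Import all_boot all_order all_algebra.
From mathcomp Require Import all_classical all_reals all_analysis.
Set Implicit Arguments. Unset Strict Implicit. Unset Printing Implicit Defensive.
Import Order.TTheory GRing.Theory Num.Theory.
Local Open Scope ring_scope.
Local Open Scope classical_set_scope.

Section Defs.
Variables (R : realType) (n : nat).
Implicit Types (adj : rel 'I_n) (a p x : 'M[R]_n).

Definition xv x (i : 'I_n) : R := \sum_(j < n) x i j.

Definition Hfun a p x : R :=
  \sum_(i < n) \sum_(j < n | 0 < x i j)
     a i j * p i j * x i j ^+ 2 / (xv x i * xv x j).

Definition Ffun a p x : 'M[R]_n :=
  \matrix_(i, j)
    if 0 < x i j then
      x i j * ((if 0 < a i j * p i j
                then a i j * p i j * x i j / (xv x i * xv x j) else 0)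
               - Hfun a p x)
    else 0.

Definition Delta adj a p (h1 : R) : set 'M[R]_n :=
  [set x | (forall i j, x i j = x j i)
        /\ (forall i j, 0 <= x i j)
        /\ (forall i j, ~~ adj i j -> x i j = 0)
        /\ \sum_(i < n) \sum_(j < n) x i j = 1
        /\ h1 <= \sum_(i < n) \sum_(j < n | 0 < a i j * p i j) x i j].

Definition Gamma adj a p (h1 : R) : set 'M[R]_n :=
  [set x | Delta adj a p h1 x /\ Ffun a p x = 0].

End Defs.

(* Main.v *)
Require Import Defs.
From mathcomp Require Import all_boot all_order all_algebra.
From mathcomp Require Import all_classical all_reals all_analysis.
Import Order.TTheory GRing.Theory Num.Theory numFieldTopology.Exports numFieldNormedType.Exports.
Local Open Scope ring_scope.
Local Open Scope classical_set_scope.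

Lemma cvg_sumr_seq {K : numFieldType} {T : Type} (F : set_system T) {FF : Filter F}
  (I : Type) (r : seq I) (f : I -> T -> K) (c : I -> K) :
  (forall j, f j x @[x --> F] --> c j) ->
  (\sum_(j <- r) f j x) @[x --> F] --> \sum_(j <- r) c j.
Proof.
move=> H; elim: r => [|j r IH].
  rewrite big_nil.
  have -> : (fun x => \sum_(j <- [::]) f j x) = (fun=> 0) by apply: funext => x; rewrite big_nil.
  exact: cvg_cst.
rewrite big_cons.
have -> : (fun x => \sum_(j0 <- j :: r) f j0 x) = (fun x => f j x + \sum_(j0 <- r) f j0 x).
  by apply: funext => x; rewrite big_cons.
exact: cvgD.
Qed.

Theorem lemma9 (R : realType) (n : nat) (adj : rel 'I_n) (a p : 'M[R]_n)
  (h1 : R) :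
  symmetric adj ->
  (forall i j, a i j = a j i) -> (forall i j, 0 <= a i j) ->
  (forall i j, 0 < a i j -> adj i j) ->
  (forall i j, p i j = p j i) -> (forall i j, 0 <= p i j <= 1) ->
  (forall i j, ~~ adj i j -> p i j = 0) ->
  (exists i j, 0 < a i j * p i j) ->
  0 < h1 <= 1 ->
  {within Gamma adj a p h1, continuous (Hfun a p)}.
Proof.
move=> _ _ _ _ _ _ _ _ _.
apply/subspace_continuousP => x Gx.
have Fxf : Filter (nbhs x) := nbhs_filter x.
have [[xsym [xge0 [_ [xsum _]]]] Fx0] := Gx.
have [i0 [j0 xpos]] : exists i j, 0 < x i j.
  case: (pselect (exists i j, 0 < x i j)) => // H; exfalso.
  have : \sum_(i < n) \sum_(j < n) x i j <= 0.
    apply: sumr_le0 => i _; apply: sumr_le0 => j _; rewrite leNgt; apply/negP => h.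
    by apply: H; exists i, j.
  by rewrite xsum ler10.
pose c := a i0 j0 * p i0 j0.
pose g (y : 'M[R]_n) := if 0 < c then c * y i0 j0 / (xv y i0 * xv y j0) else 0.
have key : forall y, Gamma adj a p h1 y -> 0 < y i0 j0 -> Hfun a p y = g y.
  move=> y [_ Fy] ypos.
  have := congr1 (fun M : 'M[R]_n => M i0 j0) Fy; rewrite /Ffun !mxE ypos.
  move/eqP; rewrite mulf_eq0 (gt_eqF ypos) /= subr_eq0 => /eqP E.
  by rewrite -E.
have cproj : forall i j, (fun y : 'M[R]_n => y i j) @ x --> x i j.
  by move=> i j; apply: coord_continuous.
have cxv : forall i, (fun y : 'M[R]_n => xv y i) @ x --> xv x i.
  move=> i; rewrite /xv; apply: (@cvg_sumr_seq R _ (nbhs x) _ _ _ (fun j (y : 'M[R]_n) => y i j)) => j.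
  exact: cproj.
have xi0 : 0 < xv x i0.
  apply: (lt_le_trans xpos); rewrite /xv (bigD1 j0) //= lerDl.
  by apply: sumr_ge0.
have xj0 : 0 < xv x j0.
  apply: (lt_le_trans xpos); rewrite /xv (bigD1 i0) //= xsym lerDl.
  by apply: sumr_ge0.
have cg : g y @[y --> x] --> g x.
  rewrite /g; case: ifP => _; last first.
    exact: cvg_cst.
  apply: cvgM; first by apply: cvgMl_tmp; apply: cproj.
  apply: cvgV; first by rewrite mulf_neq0 // gt_eqF.
  exact: (cvgM (cxv i0) (cxv j0)).
have hpos : \forall y \near x, 0 < (y : 'M[R]_n) i0 j0 := cvgr_gt (x i0 j0) (cproj i0 j0) 0 xpos.
have nearE : within (Gamma adj a p h1) (nbhs x) (fun y => g y = Hfun a p y).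
  rewrite /within /=; move: (hpos Fxf); apply: filterS => y ypos Gy; by rewrite key.
apply: cvg_trans (near_eq_cvg nearE) _.
rewrite /from_subspace key //.
exact: cvg_within_filter.
Qed.
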